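(* In the setting of the context, assume $G_{xy}^{[1]}=1$, $G_x/G_x^{[1]}\cong S_5$ and $G_x^{[1]}\cong A_4$. Then $G_x\cong S_5\boxtimes S_4$.
   Context: $\mathcal{A}=(G_x,G_e,G_{xy})$ is a finite, primitive amalgam of degree $(5,2)$ (no nontrivial subgroup of $G_{xy}$ normal in both $G_x$ and $G_e$; $|G_x:G_{xy}|=5$, $|G_e:G_{xy}|=2$), $G=G_x*_{G_{xy}}G_e$ acts on the coset graph (5-valent tree) $\Gamma$, $x$ is the vertex with stabiliser $G_x$, $y$ the neighbour with $G_e$ the setwise stabiliser of $\{x,y\}$ and $G_x\cap G_y=G_{xy}$. $G_z^{[1]}$ is the pointwise stabiliser of $z$ and its neighbours, $G_{xy}^{[1]}=G_x^{[1]}\cap G_y^{[1]}$. $S_n\boxtimes S_m=\{(g,h)\in S_n\times S_m:\operatorname{sgn}g=\operatorname{sgn}h\}$, the index-2 subgroup of $S_n\times S_m$ with no direct factor isomorphic to $S_n$ or $S_m$. *)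

(* Defs.v *)
From mathcomp Require Import all_boot all_fingroup all_solvable.
Set Implicit Arguments. Unset Strict Implicit. Unset Printing Implicit Defensive.
Local Open Scope group_scope.

(* An amalgam (G_x, G_e, G_xy) is represented inside an ambient finite group
   gT, with G_xy := G_x :&: G_e. *)

(* G_x^{[1]} : kernel of the action of G_x on the neighbours of x, which are
   the cosets G_x/G_xy; i.e. the core of G_xy in G_x. *)
Definition vstab1 (gT : finGroupType) (Gx Ge : {set gT}) : {set gT} :=
  gcore (Gx :&: Ge) Gx.

(* G_y = G_x^t for t in G_e \ G_xy, so G_y^{[1]} = (G_x^{[1]})^t and
   G_xy^{[1]} = G_x^{[1]} :&: G_y^{[1]}. *)
Definition estab1 (gT : finGroupType) (Gx Ge : {set gT}) : {set gT} :=
  vstab1 Gx Ge :&: (vstab1 Gx Ge) :^ repr (Ge :\: (Gx :&: Ge)).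

Definition primitive_amalgam (gT : finGroupType) (Gx Ge : {set gT}) : Prop :=
  forall K : {group gT}, K \subset Gx :&: Ge -> K <| Gx -> K <| Ge -> K = 1 :> {set gT}.

Definition boxtimes (n m : nat) : {set ({perm 'I_n} * {perm 'I_m})} :=
  [set p | odd_perm p.1 == odd_perm p.2].

(* Main.v *)
Require Import Defs.
From mathcomp Require Import all_boot all_fingroup all_solvable.
Local Open Scope group_scope.
From mathcomp Require Import zify.
Set Implicit Arguments. Unset Strict Implicit. Unset Printing Implicit Defensive.

Section A4.
Local Notation A := ('Alt_('I_4)).
Definition stab4 (i : 'I_4) := 'C_A[i | 'P].

Lemma cardA4 : #|A| = 12%N.
Proof. by apply: double_inj; rewrite -mul2n card_Alt card_ord. Qed.

Lemma two_others (i j : 'I_4) : i != j ->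
  exists k l : 'I_4, [/\ k != l, k != i, k != j, l != i & l != j].
Proof.
move=> ij; have: #|~: [set i; j]| == 2.
  have := cardsC [set i; j]; rewrite cards2 ij [in RHS]card_ord => /= E.
  by apply/eqP; move: E; lia.
case/cards2P=> k [l [kl E]]; exists k, l.
have: k \in ~: [set i; j] by rewrite E !inE eqxx.
have: l \in ~: [set i; j] by rewrite E !inE eqxx orbT.
rewrite !inE !negb_or => /andP[li lj] /andP[ki kj]; split=> //.
Qed.

Lemma stab4_fix (i j : 'I_4) : (forall a, a \in stab4 i -> a j = j) -> j = i.
Proof.
move=> H; apply/eqP; apply/negPn/negP; rewrite eq_sym => ij.
have [k [l [kl ki kj li lj]]] := two_others ij.
pose a := tperm j k * tperm j l.
have: a \in stab4 i.
  rewrite inE Alt_even odd_permM !odd_tperm eq_sym kj eq_sym lj /=.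
  apply/astab1P; rewrite /= /aperm /a permM.
  by rewrite !tpermD // eq_sym.
move/H; rewrite /a permM tpermL tpermD ?(eq_sym l) //; last by rewrite eq_sym.
by move=> E; rewrite E eqxx in kj.
Qed.

Lemma stab4_inj : injective stab4.
Proof.
move=> i j E; apply: (@stab4_fix j i) => a; rewrite -E => /setIP[_ /astab1P].
by [].
Qed.

Lemma card_stab4 i : #|stab4 i| = 3%N.
Proof.
have tr : [transitive A, on setT | 'P].
  apply: (ntransitive1 (m:=2)) => //.
  by have := Alt_trans 'I_4; rewrite card_ord.
have := card_orbit_stab 'P A i; rewrite (atransP tr) ?inE // cardsT card_ord.
rewrite cardA4 -/(stab4 i).
by move/eqP; rewrite -[12]/(4*3)%N eqn_pmul2l // => /eqP.
Qed.

Lemma part12 : (12`_3)%N = 3%N.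
Proof.
rewrite -[12%N]/(3 * 4)%N partnM // part_pnat_id ?pnat_id //.
by rewrite part_p'nat // p'natE.
Qed.

Lemma stab4_Syl i : 3.-Sylow(A) (stab4 i).
Proof.
by rewrite pHallE subsetIl card_stab4 cardA4 part12.
Qed.

Lemma A4_sub3 (H : {group {perm 'I_4}}) :
  H \subset A -> #|H| = 3%N -> exists j, H :=: stab4 j.
Proof.
move=> sHA oH.
pose X := [set ('C_A[i | 'P])%G | i : 'I_4].
have sXS : X \subset 'Syl_3(A).
  by apply/subsetP=> P /imsetP[i _ ->]; rewrite inE stab4_Syl.
have oX : #|X| = 4%N.
  rewrite card_imset ?card_ord // => i j E; apply: stab4_inj.
  by rewrite /stab4; move/(congr1 val): E.
have oS : #|'Syl_3(A)| = 4%N.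
  have d := card_Syl_dvd 3 A; have m := card_Syl_mod A (isT : prime 3).
  have le := subset_leq_card sXS; rewrite oX in le; rewrite cardA4 in d.
  move: d m le; move: #|_| => n.
  move=> d m le; have : n <= 12 by apply: dvdn_leq.
  move: d m le; do 13?[case: n => [|n] //]; by case: n.
have /eqP eXS : X == 'Syl_3(A) by rewrite eqEcard sXS oS oX.
have : H \in 'Syl_3(A) by rewrite inE pHallE sHA oH cardA4 part12.
by rewrite -eXS => /imsetP[j _ ->]; exists j.
Qed.

Lemma cardS4 : #|[set: {perm 'I_4}]| = 24%N.
Proof. by have := card_Sym 'I_4; rewrite card_ord. Qed.

Lemma stab4J i a : a \in A -> stab4 i :^ a = stab4 (a i).
Proof.
by move=> Aa; rewrite /stab4 conjIg conjGid // -(astab1_act 'P).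
Qed.

Lemma A4_cent (c : {perm 'I_4}) : c \in 'C(A) -> c = 1.
Proof.
move=> cAc; apply/permP=> i; rewrite perm1; apply: stab4_fix => a aS.
have aA : a \in A by case/setIP: aS.
have /astab1P : a \in 'C[i | 'P] by case/setIP: aS.
rewrite /= /aperm => ai.
have := congr1 (fun p : {perm 'I_4} => p i) (centP cAc a aA).
by rewrite !permM ai.
Qed.
End A4.

Section S5.
Local Notation A5 := ('Alt_('I_5)).

Lemma cardA5 : #|A5| = 60%N.
Proof. by apply: double_inj; rewrite -mul2n card_Alt card_ord. Qed.

Lemma cardS5 : #|[set: {perm 'I_5}]| = 120%N.
Proof. by have := card_Sym 'I_5; rewrite card_ord. Qed.

Lemma normal60 (H : {group {perm 'I_5}}) :
  [set: {perm 'I_5}] \subset 'N(H) -> #|H| = 60%N -> H :=: A5.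
Proof.
move=> nH oH.
have nHA : H :&: A5 <| A5.
  by rewrite /normal subsetIr normsI ?normG // (subset_trans _ nH) ?subsetT.
have := @simple_Alt5 'I_5; rewrite card_ord => /(_ isT) /simpleP[_ /(_ _ nHA)].
case=> E.
  have := TI_cardMg E; rewrite oH cardA5 => E2.
  have := subset_leq_card (subsetT (H * A5)); rewrite cardS5 E2.
  by [].
apply/eqP; rewrite eq_sym eqEcard cardA5 oH leqnn andbT.
by rewrite -E subsetIl.
Qed.

Lemma cent_stab5 (i0 : 'I_5) (c : {perm 'I_5}) :
  (forall p : {perm 'I_5}, p i0 = i0 -> commute c p) -> c = 1.
Proof.
move=> H.
have fix_other y : y != i0 -> c y = y.
  move=> yi0; apply/eqP/negPn/negP => cy.
  have cz z : z != i0 -> z != y -> c y = z.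
    move=> zi0 zy.
    have := H (tperm y z); rewrite tpermD ?(eq_sym i0) // => /(_ erefl).
    move=> /(congr1 (fun p : {perm 'I_5} => p y)); rewrite !permM tpermL.
    have cyz : c y != z -> tperm y z (c y) = c y.
      by move=> ?; rewrite tpermD // eq_sym.
    case: (eqVneq (c y) z) => // /cyz -> /perm_inj E.
    by rewrite E eqxx in zy.
  have : #|~: [set i0; y]| = 3%N.
    have := cardsC [set i0; y]; rewrite cards2 eq_sym yi0 [in RHS]card_ord.
    by move=> /= E; apply/eqP; move: E; lia.
  move=> oS.
  have : ~: [set i0; y] \subset [set c y].
    apply/subsetP=> z; rewrite !inE negb_or => /andP[zi0 zy].
    by rewrite (cz z zi0 zy).
  by move/subset_leq_card; rewrite oS cards1.
apply/permP=> x; rewrite perm1.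
case: (eqVneq x i0) => [->|xi0]; last exact: fix_other.
apply/eqP/negPn/negP => ci0.
have := fix_other (c i0) ci0 => /perm_inj E.
by rewrite E eqxx in ci0.
Qed.
End S5.


Section Transport.
Variables (gT : finGroupType) (T : finType) (to : {action gT &-> T}).
Variables (D : {group gT}) (n : nat) (h : 'I_n.+1 -> T).
Hypothesis h_inj : injective h.
Hypothesis h_st : forall g i, g \in D -> exists j, h j = to (h i) g.

Definition hinv x := odflt ord0 [pick i | h i == x].

Lemma hinv_im x j : h j = x -> h (hinv x) = x.
Proof.
rewrite /hinv; case: pickP => [i /eqP //|/(_ j)].
by rewrite -/(h j == x) => /eqP.
Qed.

Definition tract i g := if g \in D then hinv (to (h i) g) else i.

Lemma tractE i g : g \in D -> h (tract i g) = to (h i) g.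
Proof.
move=> Dg; rewrite /tract Dg; have [j Ej] := h_st i Dg.
exact: hinv_im Ej.
Qed.

Lemma tract_is_action : is_action D tract.
Proof.
split.
  move=> g i j; case Dg: (g \in D); last by rewrite /tract Dg.
  move=> E; apply: h_inj; apply: (act_inj to g).
  by rewrite -!tractE // E.
move=> i a b Da Db; apply: h_inj.
by rewrite tractE ?groupM // !tractE // actM.
Qed.

Definition tr_action := Action tract_is_action.

Lemma trpermE g i : g \in D -> h (actperm tr_action g i) = to (h i) g.
Proof. by move=> Dg; rewrite actpermE /= tractE. Qed.

End Transport.

Lemma mulpair (a c : {perm 'I_5}) (b d : {perm 'I_4}) : (a, b) * (c, d) = (a * c, b * d).
Proof. by []. Qed.
Lemma card_boxtimes : #|boxtimes 5 4| = 1440%N.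
Proof.
have -> : boxtimes 5 4 = setX 'Alt_('I_5) 'Alt_('I_4) :|: setX (~: 'Alt_('I_5)) (~: 'Alt_('I_4)).
  apply/setP=> [[p q]]; rewrite in_setU !in_setX !in_setC !Alt_even /boxtimes in_set /=.
  by case: (odd_perm p); case: (odd_perm q).
rewrite cardsU.
have -> : #|setX 'Alt_('I_5) 'Alt_('I_4) :&: setX (~: 'Alt_('I_5)) (~: 'Alt_('I_4))| = 0%N.
  apply/eqP; rewrite cards_eq0; apply/eqP/setP => [[p q]].
  rewrite in_set0; apply/negbTE/negP=> /setIP[].
  rewrite !in_setX !in_setC /= !Alt_even.
  by case: (odd_perm p).
have c5 : #|~: 'Alt_('I_5)| = 60%N.
  have := cardsC 'Alt_('I_5); rewrite cardA5 -cardsT.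
  have := card_Sym 'I_5; rewrite card_ord /Sym => -> /=.
  have -> : (5`! = 120)%N by []. lia.
have c4 : #|~: 'Alt_('I_4)| = 12%N.
  have := cardsC 'Alt_('I_4); rewrite cardA4 -cardsT.
  have := card_Sym 'I_4; rewrite card_ord /Sym => -> /=.
  have -> : (4`! = 24)%N by []. lia.
rewrite !cardsX c5 c4 cardA5 cardA4.
by [].
Qed.

Lemma card_morph_ker (aT rT : finGroupType) (D A : {group aT})
   (f : {morphism D >-> rT}) : A \subset D -> #|A| = (#|f @* A| * #|'ker_A f|)%N.
Proof.
move=> sAD; rewrite card_morphim (setIidPr sAD) mulnC.
by rewrite -(LagrangeI A ('ker f)).
Qed.

Unset Implicit Arguments.

Theorem mainTheorem14 (gT : finGroupType) (Gx Ge : {group gT}) :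
  #|Gx : Gx :&: Ge| = 5%N ->
  #|Ge : Gx :&: Ge| = 2%N ->
  primitive_amalgam Gx Ge ->
  estab1 Gx Ge = 1 ->
  (Gx / vstab1 Gx Ge) \isog [set: {perm 'I_5}] ->
  vstab1 Gx Ge \isog 'Alt_('I_4) ->
  Gx \isog boxtimes 5 4.
Proof.
move=> i5 i2 prim est qiso kiso.
pose Gxy := (Gx :&: Ge)%G.
pose K := [group of gcore Gxy Gx].
have defK : vstab1 Gx Ge = K by [].
rewrite /estab1 defK -/Gxy in est; rewrite defK in qiso kiso.
rewrite -/Gxy in i5 i2.
have sGxyGx : Gxy \subset Gx by apply: subsetIl.
have sGxyGe : Gxy \subset Ge by apply: subsetIr.
have sKGxy : K \subset Gxy by apply: gcore_sub.
have sKGx : K \subset Gx by apply: subset_trans sGxyGx.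
have nKGx : K <| Gx by apply: gcore_normal.
have oK : #|K| = 12%N by rewrite (card_isog kiso) cardA4.
have oGx : #|Gx| = 1440%N.
  have := card_isog qiso; rewrite cardS5 card_quotient ?normal_norm // => E.
  by rewrite -(Lagrange sKGx) oK E.
have oGxy : #|Gxy| = 288%N.
  by have := Lagrange sGxyGx; rewrite i5 oGx; lia.
have oGe : #|Ge| = 576%N.
  by have := Lagrange sGxyGe; rewrite i2 oGxy; lia.
pose t := repr (Ge :\: Gxy).
have tGe : t \in Ge :\: Gxy.
  rewrite /t; case: (set_0Vmem (Ge :\: Gxy)) => [E|[x xin]]; last exact: mem_repr xin.
  have : Ge \subset Gxy by rewrite -setD_eq0 E.
  by move/subset_leq_card; rewrite oGe oGxy.
change (K :&: K :^ t = 1) in est.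
pose Om := rcosets Gxy Gx.
have sOm : size (enum Om) = 5%N by rewrite -cardE.
pose h5 (i : 'I_5) := nth set0 (enum Om) i.
have h5inj : injective h5.
  move=> i j /eqP; rewrite /h5 nth_uniq ?sOm ?enum_uniq //.
  by move/eqP/val_inj.
have h5Om i : h5 i \in Om by rewrite -mem_enum mem_nth ?sOm.
have h5sur w : w \in Om -> exists j, h5 j = w.
  move=> wOm; have lt : index w (enum Om) < 5 by rewrite -sOm index_mem mem_enum.
  by exists (Ordinal lt); rewrite /h5 nth_index ?mem_enum.
have h5st g i : g \in Gx -> exists j, h5 j = 'Rs%act (h5 i) g.
  move=> Gg; apply: h5sur; have := h5Om i; case/rcosetsP=> x Gx_x ->.
  by rewrite /= rcosetE -rcosetM mem_rcosets mulSGid ?groupM.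
pose pi := actperm (tr_action h5inj h5st).
have piE g i : g \in Gx -> h5 (pi g i) = h5 i :* g.
  by move=> Gg; rewrite (trpermE h5inj h5st) //= rcosetE.
have [i0 hi0] : exists i0, h5 i0 = Gxy.
  by apply: h5sur; rewrite -[X in X \in _]mulg1 mem_rcosets mulSGid ?group1.
have P1 g : g \in Gx -> (forall j, pi g j = j) -> g \in K.
  move=> Gg fixg; apply/bigcapP=> x Gx_x.
  have [j hj] : exists j, h5 j = Gxy :* x by apply: h5sur; rewrite mem_rcosets mulSGid.
  have := piE g j Gg; rewrite fixg hj -rcosetM => E.
  have : x * g * x^-1 \in Gxy.
    have E2 : Gxy :* (x * g * x^-1) = Gxy by rewrite rcosetM -E -rcosetM mulgV rcoset1.
    by have := rcoset_refl Gxy (x * g * x^-1); rewrite E2.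
  by rewrite mem_conjg /conjg invgK mulgA.
have P2 g : g \in Gx -> pi g i0 = i0 -> g \in Gxy.
  move=> Gg fixg; have := piE g i0 Gg; rewrite fixg hi0 => E.
  by have := rcoset_refl Gxy g; rewrite -E.
have P2' g : g \in Gxy -> pi g i0 = i0.
  move=> Gg; apply: (h5inj); rewrite piE ?(subsetP sGxyGx) // hi0 rcoset_id //.
case/isogP: kiso => f injf fK.
pose h4 (i : 'I_4) := f @*^-1 ('C_('Alt_('I_4))[i | 'P]).
have stabA i : 'C_('Alt_('I_4))[i | 'P] \subset f @* K by rewrite fK subsetIl.
have fh4 i : f @* h4 i = stab4 i by rewrite morphpreK.
have h4K i : h4 i \subset K by apply: morphpre_sub.
have h4inj : injective h4.
  by move=> i j E; apply: stab4_inj; rewrite -!fh4 E.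
have h4st g i : g \in Gx -> exists j, h4 j = 'Js%act (h4 i) g.
  move=> Gg /=.
  have sXK : h4 i :^ g \subset K.
    by rewrite -(normsP (normal_norm nKGx) g Gg) conjSg.
  have oX : #|f @* (h4 i :^ g)| = 3%N.
    by rewrite card_injm // cardJg -(card_injm injf (h4K i)) fh4 card_stab4.
  have sXA : f @* (h4 i :^ g) \subset 'Alt_('I_4) by rewrite -fK morphimS.
  have [j Ej] := @A4_sub3 [group of f @* (h4 i :^ g)] sXA oX.
  by exists j; rewrite /h4 -[X in f @*^-1 X]/(stab4 j) -Ej injmK.
pose rho := actperm (tr_action h4inj h4st).
have rhoE g i : g \in Gx -> h4 (rho g i) = h4 i :^ g.
  by move=> Gg; rewrite (trpermE h4inj h4st).
have R1 k : k \in K -> rho k = f k.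
  move=> Kk; apply/permP=> i; apply: (h4inj); rewrite rhoE ?(subsetP sKGx) //.
  have sub : h4 i :^ k \subset K by rewrite -(conjGid Kk) conjSg.
  rewrite -(injmK injf sub) morphimJ // fh4 stab4J //.
  by rewrite -fK mem_morphim.
have piK k : k \in K -> pi k = 1.
  move=> Kk; apply/permP=> j; rewrite perm1; apply: (h5inj).
  rewrite piE ?(subsetP sKGx) //.
  have := h5Om j; case/rcosetsP=> x Gx_x ->.
  have : k \in Gxy :^ x by move/bigcapP: Kk; apply.
  rewrite mem_conjg => ky.
  have -> : Gxy :* x :* k = Gxy :* (k ^ x^-1) :* x.
    by rewrite -!rcosetM /conjg invgK !mulgA mulgKV.
  by rewrite rcoset_id.
have kerpi g : g \in Gx -> pi g = 1 -> g \in K.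
  by move=> Gg E; apply: P1 => // j; rewrite E perm1.
have kerpiK : 'ker pi \subset K.
  apply/subsetP=> g kg; apply: kerpi (mker kg).
  by case/setIP: kg.
have piGx : pi @* Gx = setT.
  apply/eqP; rewrite eqEcard subsetT cardS5.
  have := card_morph_ker pi (subxx Gx); rewrite oGx.
  have : #|'ker_Gx pi| <= 12 by rewrite -oK subset_leq_card // subIset // kerpiK orbT.
  move=> le E; have : 1440 <= #|pi @* Gx| * 12 by rewrite E leq_mul2l le orbT.
  rewrite /=; lia.
have rhoK : rho @* K = 'Alt_('I_4).
  by rewrite -fK; apply: eq_in_morphim; [rewrite (setIidPr sKGx) setIid | exact: R1].
pose N := 'ker rho.
have sNGx : N \subset Gx by apply: subsetIl.
have nNGx : N <| Gx by apply: ker_normal.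
have NK1 : N :&: K = 1.
  apply/trivgP/subsetP=> x /setIP[Nx Kx]; rewrite inE.
  have fx : f x = 1 by rewrite -R1 //; exact: mker Nx.
  by apply/eqP; apply: (injmP injf) => //; rewrite fx morph1.
have kerNpi : 'ker_N pi = 1.
  by apply/trivgP; rewrite -NK1 setIS.
have rho_onto : #|rho @* Gx| = 24%N.
  have sA : 'Alt_('I_4) \subset rho @* Gx by have := morphimS rho sKGx; rewrite rhoK.
  have d1 : #|rho @* Gx| %| 24.
    by have := cardSg (subsetT (rho @* Gx)); rewrite cardS4.
  have d2 : 12 %| #|rho @* Gx| by rewrite -cardA4 cardSg.
  have [//|o12] : #|rho @* Gx| = 24%N \/ #|rho @* Gx| = 12%N.
    have le : #|rho @* Gx| <= 24 by apply: dvdn_leq d1.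
    move: d1 d2 le; move: #|_| => n.
    by do 25?[case: n => [|n] //]; try by [left|right].
  exfalso.
  have eIm : rho @* Gx = rho @* K.
    apply/eqP; rewrite eq_sym eqEcard morphimS //= rhoK cardA4 o12 leqnn.
    by [].
  have eGx : N * K = Gx.
    apply/eqP; rewrite eqEsubset mulG_subG sNGx sKGx /=.
    apply/subsetP=> x Gx_x.
    have : x \in rho @*^-1 (rho @* K).
      by rewrite -eIm mem_morphpre ?mem_morphim.
    by rewrite morphimK.
  have oN' : #|N| = 120%N.
    have := TI_cardMg NK1; rewrite eGx oGx oK => E; apply/eqP.
    by rewrite -(eqn_pmul2r (_ : 0 < 12)) // -E.
  have cNK : N \subset 'C(K).
    apply/commG1P/trivgP; rewrite -NK1 subsetI commg_subl commg_subr.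
    by rewrite (subset_trans sKGx (normal_norm nNGx)) (subset_trans sNGx (normal_norm nKGx)).
  pose M := (N :&: Gxy)%G.
  have sMN : M \subset N by apply: subsetIl.
  have sMGxy : M \subset Gxy by apply: subsetIr.
  have MK1 : M :&: K = 1 by apply/trivgP; rewrite -NK1 setSI.
  have eGxy : M * K = Gxy.
    rewrite /M /= setIC group_modr // eGx; exact/setIidPl.
  have oM : #|M| = 24%N.
    have := TI_cardMg MK1; rewrite eGxy oGxy oK => E; apply/eqP.
    by rewrite -(eqn_pmul2r (_ : 0 < 12)) // -E.
  have KcK1 : K :&: 'C(K) = 1.
    apply/trivgP/subsetP=> x /setIP[Kx cKx]; rewrite inE.
    have fx1 : f x = 1.
      apply: A4_cent; rewrite -fK; apply/centP=> a /morphimP[k Kk _ ->].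
      by rewrite /commute -!morphM // (centP cKx k Kk).
    by apply/eqP; apply: (injmP injf) => //; rewrite fx1 morph1.
  have sMC : M \subset 'C_Gxy(K) by rewrite subsetI sMGxy (subset_trans sMN cNK).
  have eC : 'C_Gxy(K) = M.
    have e : M * (K :&: 'C_Gxy(K)) = 'C_Gxy(K).
      by rewrite group_modl // eGxy; apply/setIidPr; apply: subsetIl.
    have e1 : K :&: 'C_Gxy(K) = 1.
      by apply/trivgP; rewrite -KcK1 setIS // subsetIr.
    by rewrite -e e1 mulg1.
  have [tGe' tGxy] : t \in Ge /\ t \notin Gxy by case/setDP: tGe.
  have nGxyGe : Gxy <| Ge by apply: index2_normal.
  have Gxyt : Gxy :^ t = Gxy by apply: (normsP (normal_norm nGxyGe)).
  pose L := (K :^ t)%G.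
  have sLGxy : L \subset Gxy by change (K :^ t \subset Gxy); rewrite -{1}Gxyt conjSg.
  have LK1 : L :&: K = 1 by rewrite setIC; exact: est.
  have nKGxy : K <| Gxy by apply: normalS nKGx.
  have nLGxy : L <| Gxy by change (K :^ t <| Gxy); rewrite -{1}Gxyt normalJ.
  have cLK : L \subset 'C(K).
    apply/commG1P/trivgP; rewrite -LK1 subsetI commg_subl commg_subr.
    by rewrite (subset_trans sKGxy (normal_norm nLGxy)) (subset_trans sLGxy (normal_norm nKGxy)).
  have sLM : L \subset M by rewrite -eC subsetI sLGxy.
  have eC' : 'C_Gxy(L) = 'C_Gxy(K) :^ t by rewrite conjIg Gxyt centJ.
  have oC' : #|'C_Gxy(L)| = 24%N by rewrite eC' cardJg eC oM.
  have sKC' : K \subset 'C_Gxy(L) by rewrite subsetI sKGxy centsC.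
  pose D := ('C_Gxy(L) :&: M)%G.
  have eC'2 : D * K = 'C_Gxy(L).
    rewrite /D /= group_modr // eGxy; apply/setIidPl; apply: subsetIl.
  have DK1 : D :&: K = 1 by apply/trivgP; rewrite -MK1 setSI // subsetIr.
  have oD : #|D| = 2%N.
    have := TI_cardMg DK1; rewrite eC'2 oC' oK => E; apply/eqP.
    by rewrite -(eqn_pmul2r (_ : 0 < 12)) // -E.
  have nDM : M \subset 'N(D).
    change (M \subset 'N('C_Gxy(L) :&: M)).
    apply: normsI; last exact: normG.
    apply: subset_trans sMGxy _; apply: normsI; first exact: normG.
    by apply: norms_cent; apply: normal_norm.
  have [d Dd nd] : exists2 d, d \in D & d != 1.
    by apply/trivgPn; apply/eqP => D1; rewrite D1 cards1 in oD.
  have eD : D :=: [set 1; d].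
    apply/eqP; rewrite eq_sym eqEcard cards2 eq_sym nd oD leqnn andbT.
    by rewrite subUset !sub1set group1 Dd.
  have Md : d \in M by case/setIP: Dd.
  have cdM m : m \in M -> commute d m.
    move=> Mm; have : d ^ m \in D by rewrite memJ_norm // (subsetP nDM).
    rewrite eD !inE conjg_eq1 (negPf nd) /= => /eqP dm.
    by rewrite /commute conjgC dm.
  have Gd : d \in Gx by apply: (subsetP sNGx); apply: (subsetP sMN).
  have piNT : pi @* N = setT.
    apply/eqP; rewrite eqEcard subsetT cardS5.
    by have := card_morph_ker pi sNGx; rewrite kerNpi cards1 muln1 oN' => <-.
  have pid : pi d = 1.
    apply: (cent_stab5 (i0:=i0)) => p pi0.
    have : p \in pi @* N by rewrite piNT inE.
    case/morphimP=> n Gn Nn pn; rewrite pn in pi0 *.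
    have Mn : n \in M by apply/setIP; split=> //; exact: P2 Gn pi0.
    change (pi d * pi n = pi n * pi d); rewrite /pi -!actpermM //.
    by rewrite (cdM n Mn).
  have : d \in N :&: K by rewrite inE (subsetP sMN d Md) kerpi.
  by rewrite NK1 inE (negPf nd).
have oN : #|N| = 60%N.
  have := card_morph_ker rho (subxx Gx); rewrite oGx rho_onto.
  rewrite (setIidPr sNGx) => E; apply/eqP.
  by rewrite -(eqn_pmul2l (_ : 0 < 24)) // -E.
have piN : pi @* N = 'Alt_('I_5).
  apply: normal60.
    by rewrite -piGx; apply: normal_norm; apply: morphim_normal.
  have := card_morph_ker pi sNGx; rewrite oN.
  by rewrite kerNpi cards1 muln1.
have oNK : #|N * K| = 720%N by rewrite TI_cardMg // oN oK.
pose P := pi @*^-1 'Alt_('I_5).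
pose R := rho @*^-1 'Alt_('I_4).
have sNKP : N * K \subset P.
  apply/subsetP=> x /mulsgP[n k Nn Kk ->].
  have Gn := subsetP sNGx n Nn; have Gk := subsetP sKGx k Kk.
  rewrite mem_morphpre ?groupM // morphM //.
  change (pi n * pi k \in 'Alt_('I_5)); rewrite (piK k) // mulg1 -piN.
  exact: mem_morphim.
have sNKR : N * K \subset R.
  apply/subsetP=> x /mulsgP[n k Nn Kk ->].
  have Gn := subsetP sNGx n Nn; have Gk := subsetP sKGx k Kk.
  rewrite mem_morphpre ?groupM // morphM //.
  change (rho n * rho k \in 'Alt_('I_4)); rewrite (R1 k) //.
  have -> : rho n = 1 by exact: mker Nn.
  by rewrite mul1g; have := mem_morphim f Kk Kk; rewrite fK.
have eP : P = N * K.
  apply/eqP; rewrite eq_sym eqEcard sNKP oNK.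
  have sPGx : P \subset Gx by apply: morphpre_sub.
  rewrite (card_morph_ker pi sPGx) morphpreK; last by rewrite piGx subsetT.
  rewrite cardA5 -[720%N]/(60 * 12)%N leq_mul2l /= -oK.
  by rewrite subset_leq_card // subIset // kerpiK orbT.
have eR : R = N * K.
  apply/eqP; rewrite eq_sym eqEcard sNKR oNK.
  have sRGx : R \subset Gx by apply: morphpre_sub.
  rewrite (card_morph_ker rho sRGx) morphpreK; last by have := morphimS rho sKGx; rewrite rhoK.
  rewrite cardA4 -[720%N]/(12 * 60)%N leq_mul2l /= -oN.
  by rewrite subset_leq_card // subsetIr.
have parity g : g \in Gx -> odd_perm (pi g) = odd_perm (rho g).
  move=> Gg.
  have E : (pi g \in 'Alt_('I_5)) = (rho g \in 'Alt_('I_4)).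
    apply/idP/idP=> H.
      have : g \in P by rewrite mem_morphpre.
      by rewrite eP -eR => /morphpreP[_].
    have : g \in R by rewrite mem_morphpre.
    by rewrite eR -eP => /morphpreP[_].
  rewrite !Alt_even in E.
  by move: E; case: (odd_perm (pi g)); case: (odd_perm (rho g)).
pose phi g := (pi g, rho g).
have phiM : {in Gx &, {morph phi : x y / x * y}}.
  by move=> x y Gx_x Gx_y; rewrite /phi mulpair /pi /rho !actpermM.
pose Phi := Morphism phiM.
have injPhi : 'injm Phi.
  apply/subsetP=> x kx; have Gx_x : x \in Gx by case/setIP: kx.
  have := mker kx; rewrite /= /phi => -[pix rhox].
  have Kx : x \in K by apply: kerpi.
  rewrite inE; apply/eqP; apply: (injmP injf) => //.
  by rewrite -R1 // rhox morph1.
have EPhi : Phi @* Gx = boxtimes 5 4.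
  apply/eqP; rewrite eqEcard card_injm // card_boxtimes oGx leqnn andbT.
  apply/subsetP=> y /morphimP[x Gx_x _ ->].
  by rewrite /boxtimes in_set /= parity.
by rewrite -EPhi; apply/isogP; exists Phi.
Qed.
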